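(* Every permutation class containing only finitely many simple permutations is finitely based, i.e. its basis is finite.
   Context: A permutation $\pi$ contains $\sigma$ ($\sigma\le\pi$) if some subsequence of $\pi$ has the same relative order as $\sigma$. A permutation class is a downset under $\le$; its basis is the set of $\le$-minimal permutations not in the class. An interval of a permutation is a set of contiguous positions whose values form a contiguous set; a permutation of length $n$ is simple if its only intervals have sizes $0,1,n$. *)

(* Defs.v *)
(* Permutations of length n are represented as sequences
   of naturals that are rearrangements of [:: 0; 1; ...; n-1]. *)
From mathcomp Require Import all_boot.
Set Implicit Arguments. Unset Strict Implicit. Unset Printing Implicit Defensive.

Definition is_perm (s : seq nat) : Prop := perm_eq s (iota 0 (size s)).

Definition order_iso (t sigma : seq nat) : Prop :=
  size t = size sigma /\
  forall i j, i < size t -> j < size t ->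
    (nth 0 t i < nth 0 t j) = (nth 0 sigma i < nth 0 sigma j).

Definition contains (pi sigma : seq nat) : Prop :=
  exists t, subseq t pi /\ order_iso t sigma.

Definition perm_class (C : seq nat -> Prop) : Prop :=
  (forall p, C p -> is_perm p) /\
  (forall p q, C p -> is_perm q -> contains p q -> C q).

Definition in_basis (C : seq nat -> Prop) (b : seq nat) : Prop :=
  is_perm b /\ ~ C b /\
  (forall q, is_perm q -> contains b q -> q <> b -> C q).

Definition is_interval (s : seq nat) (i j : nat) : Prop :=
  i <= j <= size s /\
  exists a, perm_eq (drop i (take j s)) (iota a (j - i)).

Definition simple (s : seq nat) : Prop :=
  forall i j, is_interval s i j ->
    j - i = 0 \/ j - i = 1 \/ j - i = size s.

Definition finite_set (P : seq nat -> Prop) : Prop :=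
  exists L : seq (seq nat), forall p, P p -> p \in L.

(* Main.v *)
Require Import Defs.
From mathcomp Require Import all_boot.
From Stdlib Require Import Lia Classical IndefiniteDescription.
Set Implicit Arguments. Unset Strict Implicit. Unset Printing Implicit Defensive.

Definition mono (Z : seq (nat * nat)) : Prop :=
  forall p q, p \in Z -> q \in Z -> (p.1 < q.1) = (p.2 < q.2).

Lemma in_zipP (a b : seq nat) p : size a = size b -> p \in zip a b ->
  exists2 i, i < size a & p = (nth 0 a i, nth 0 b i).
Proof.
move=> Hs Hp; exists (index p (zip a b)).
  by move: Hp; rewrite -index_mem size_zip Hs minnn.
by rewrite -nth_zip // nth_index.
Qed.

Lemma zip_in (a b : seq nat) i : size a = size b -> i < size a ->
  (nth 0 a i, nth 0 b i) \in zip a b.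
Proof.
move=> Hs Hi; rewrite -nth_zip //; apply: mem_nth; by rewrite size_zip Hs minnn -Hs.
Qed.

Definition cont (pi sigma : seq nat) : Prop :=
  exists t, subseq t pi /\ size t = size sigma /\ mono (zip t sigma).

Lemma contE pi sigma : contains pi sigma <-> cont pi sigma.
Proof.
split.
  move=> [t [Hsub [Hs Hiso]]]; exists t; split=> //; split=> // p q Hp Hq.
  have [i Hi ->] := in_zipP Hs Hp; have [j Hj ->] := in_zipP Hs Hq.
  by rewrite /= Hiso.
move=> [t [Hsub [Hs Hm]]]; exists t; split=> //; split=> // i j Hi Hj.
by have := Hm _ _ (zip_in Hs Hi) (zip_in Hs Hj).
Qed.

Lemma zip_mask (m : bitseq) (a b : seq nat) : size a = size b ->
  zip (mask m a) (mask m b) = mask m (zip a b).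
Proof.
elim: m a b => [|c m IH] [|x a] [|y b] //= [Hs].
by case: c; rewrite /= IH.
Qed.

Lemma mono_mask m Z : mono Z -> mono (mask m Z).
Proof. move=> H p q Hp Hq; apply: H; exact: (mem_subseq (mask_subseq m Z)). Qed.

Lemma mono_comp (a b c : seq nat) : size a = size b -> size b = size c ->
  mono (zip a b) -> mono (zip b c) -> mono (zip a c).
Proof.
move=> Hab Hbc H1 H2 p q Hp Hq.
have Hac : size a = size c by rewrite Hab.
have [i Hi ->] := in_zipP Hac Hp; have [j Hj ->] := in_zipP Hac Hq.
have := H1 _ _ (zip_in Hab Hi) (zip_in Hab Hj).
rewrite Hab in Hi Hj.
have := H2 _ _ (zip_in Hbc Hi) (zip_in Hbc Hj).
by move=> /= -> ->.
Qed.

Lemma mono_refl a : mono (zip a a).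
Proof.
move=> p q Hp Hq.
have [i _ ->] := in_zipP (erefl _) Hp; have [j _ ->] := in_zipP (erefl _) Hq.
by [].
Qed.

Lemma cont_trans s3 s2 s1 : cont s3 s2 -> cont s2 s1 -> cont s3 s1.
Proof.
move=> [t2 [H2 [S2 M2]]] [t1 [H1 [S1 M1]]].
case/subseqP: H1 => m Hm Et1.
exists (mask m t2); split; first exact: subseq_trans (mask_subseq _ _) H2.
have Sm : size (mask m t2) = size t1 by rewrite Et1 !size_mask // S2.
split; first by rewrite Sm.
apply: (@mono_comp _ (mask m s2)) => //.
- by rewrite Sm Et1.
- by rewrite -Et1.
- by rewrite zip_mask //; apply: mono_mask.
- by rewrite -Et1.
Qed.

Lemma cont_refl s : cont s s.
Proof. exists s; split=> //; split=> //; exact: mono_refl. Qed.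

Lemma cont_subseq s t : subseq t s -> cont s t.
Proof. move=> H; exists t; split=> //; split=> //; exact: mono_refl. Qed.

Definition rank (s : seq nat) (x : nat) := count (fun y => y < x) s.
Definition std (s : seq nat) := map (rank s) s.

Lemma count_lt_strict s x y : x < y -> x \in s -> rank s x < rank s y.
Proof.
rewrite /rank; move=> Hxy; elim: s => //= z s IH; rewrite in_cons => /orP [/eqP Ez | H].
  rewrite -Ez.
  rewrite ltnn Hxy /= add0n add1n ltnS; apply: sub_count => w /= H; exact: ltn_trans H Hxy.
have := IH H; case Hz: (z < x); first by rewrite (ltn_trans Hz Hxy).
by case: (z < y) => //= Hl; apply: ltn_trans Hl _.
Qed.

Lemma rank_lt s x y : x \in s -> (x < y) = (rank s x < rank s y).
Proof.
move=> Hx; case: (ltnP x y) => Hxy; first by rewrite count_lt_strict.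
apply/esym/negbTE; rewrite -leqNgt; apply: sub_count => w /= H; exact: leq_trans H Hxy.
Qed.

Lemma rank_inj s : {in s &, injective (rank s)}.
Proof.
move=> x y Hx Hy E; case: (ltngtP x y) => // H.
  by move: (count_lt_strict H Hx); rewrite E ltnn.
by move: (count_lt_strict H Hy); rewrite E ltnn.
Qed.

Lemma rank_small s x : x \in s -> rank s x < size s.
Proof.
move=> Hx; rewrite /rank -(count_predC (fun y => y < x) s) -{1}(addn0 (count _ s)) ltn_add2l.
rewrite -has_count; apply/hasP; exists x => //=; by rewrite ltnn.
Qed.

Lemma size_std s : size (std s) = size s.
Proof. by rewrite size_map. Qed.

Lemma perm_of_uniq (p : seq nat) : uniq p -> all (fun x => x < size p) p -> is_perm p.
Proof.
move=> Hu /allP Ha; rewrite /is_perm; apply: uniq_perm => //; first exact: iota_uniq.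
have Hsub : {subset p <= iota 0 (size p)} by move=> x Hx; rewrite mem_iota add0n Ha.
have [] := uniq_min_size Hu Hsub; by rewrite size_iota.
Qed.

Lemma std_perm s : uniq s -> is_perm (std s).
Proof.
move=> Hu; apply: perm_of_uniq.
  by rewrite map_inj_in_uniq //; exact: rank_inj.
apply/allP => y /mapP [x Hx ->]; rewrite size_std; exact: rank_small.
Qed.

Lemma cont_std s : cont s (std s).
Proof.
exists s; split=> //; split; first by rewrite size_std.
rewrite /std -{1}(map_id s) zip_map => p q /mapP [x Hx ->] /mapP [y Hy ->] /=.
exact: rank_lt.
Qed.

Lemma cont_std' s : cont (std s) s.
Proof.
exists (std s); split=> //; split; first by rewrite size_std.
rewrite /std -[X in zip _ X](map_id s) zip_map => p q /mapP [x Hx ->] /mapP [y Hy ->] /=.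
by rewrite -rank_lt.
Qed.

Lemma perm_uniq' p : is_perm p -> uniq p.
Proof. by move=> H; rewrite (perm_uniq H) iota_uniq. Qed.

Lemma min_nat (Q : nat -> Prop) : (exists n, Q n) -> exists n, Q n /\ forall m, Q m -> n <= m.
Proof.
move=> [n Hn]; elim/ltn_ind: n Hn => n IH Hn.
case: (classic (exists m, Q m /\ m < n)) => [[m [Hm Hmn]]|H]; first exact: IH m Hmn Hm.
exists n; split=> // m Hm; rewrite leqNgt; apply/negP => Hl; apply: H; by exists m.
Qed.

Lemma chain_build (R : nat -> Prop) (S : nat -> nat -> Prop) n0 :
  (forall n, R n -> exists j, n < j /\ R j /\ S n j) -> R n0 ->
  exists phi : nat -> nat, phi 0 = n0 /\
    forall k, R (phi k) /\ phi k < phi k.+1 /\ S (phi k) (phi k.+1).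
Proof.
move=> H H0.
have H' : forall n, exists j, R n -> n < j /\ R j /\ S n j.
  move=> n; case: (classic (R n)) => [Hn|Hn].
    by have [j Hj] := H n Hn; exists j.
  by exists 0.
pose nxt n := proj1_sig (constructive_indefinite_description _ (H' n)).
have Hnxt n : R n -> n < nxt n /\ R (nxt n) /\ S n (nxt n).
  exact: (proj2_sig (constructive_indefinite_description _ (H' n))).
have HR : forall k, R (iter k nxt n0).
  elim=> //= k IH; by have [_ [? _]] := Hnxt _ IH.
exists (fun k => iter k nxt n0); split=> // k; split; first exact: HR.
by have [? [_ ?]] := Hnxt _ (HR k).
Qed.

Lemma strict_mono (phi : nat -> nat) : (forall k, phi k < phi k.+1) ->
  forall a b, a < b -> phi a < phi b.
Proof.
move=> H a; elim=> // b IH; rewrite ltnS leq_eqVlt => /orP [/eqP-> | Hab] //.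
exact: ltn_trans (IH Hab) (H b).
Qed.

Definition goodP (X : Type) (le : X -> X -> Prop) (P : X -> Prop) :=
  forall f : nat -> X, (forall n, P (f n)) -> exists i j, i < j /\ le (f i) (f j).

Lemma terminal_finite (X : Type) (le : X -> X -> Prop) (P : X -> Prop) :
  goodP le P -> forall f, (forall n, P (f n)) ->
  exists N, forall n, N <= n -> exists j, n < j /\ le (f n) (f j).
Proof.
move=> Hg f Hf; apply: NNPP => HN.
have HT : forall N, exists n, N <= n /\ forall j, n < j -> ~ le (f n) (f j).
  move=> N; apply: NNPP => HnN; apply: HN; exists N => n Hn.
  apply: NNPP => Hj; apply: HnN; exists n; split=> // j Hnj Hle; apply: Hj; by exists j.
have [n0 [_ Hn0]] := HT 0.
have Hstep : forall n, (forall j, n < j -> ~ le (f n) (f j)) ->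
   exists j, n < j /\ (forall j', j < j' -> ~ le (f j) (f j')) /\ True.
  move=> n _; have [j [Hj HR]] := HT n.+1; by exists j.
have [phi [_ Hphi]] := @chain_build (fun n => forall j, n < j -> ~ le (f n) (f j))
   (fun _ _ => True) n0 Hstep Hn0.
have [i [j [Hij Hle]]] := Hg (fun k => f (phi k)) (fun k => Hf _).
have [Hi _] := Hphi i; exact: Hi _ (@strict_mono phi (fun k => proj1 (proj2 (Hphi k))) i j Hij) Hle.
Qed.

Lemma ascending (X : Type) (le : X -> X -> Prop) (P : X -> Prop) :
  goodP le P -> forall f, (forall n, P (f n)) ->
  exists phi, (forall k, phi k < phi k.+1) /\ (forall k, le (f (phi k)) (f (phi k.+1))).
Proof.
move=> Hg f Hf; have [N HN] := terminal_finite Hg Hf.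
have Hstep : forall n, N <= n -> exists j, n < j /\ N <= j /\ le (f n) (f j).
  move=> n Hn; have [j [Hj Hle]] := HN n Hn; exists j; split=> //; split=> //.
  exact: leq_trans Hn (ltnW Hj).
have [phi [_ Hphi]] := @chain_build (fun n => N <= n) (fun n j => le (f n) (f j)) N Hstep (leqnn N).
exists phi; split=> k; by have [_ [? ?]] := Hphi k.
Qed.

Lemma chain_le (X : Type) (le : X -> X -> Prop) (g : nat -> X) :
  (forall a b c, le a b -> le b c -> le a c) ->
  (forall k, le (g k) (g k.+1)) -> forall a b, a < b -> le (g a) (g b).
Proof.
move=> Ht H a; elim=> // b IH; rewrite ltnS leq_eqVlt => /orP [/eqP-> | Hab] //.
exact: Ht (IH Hab) (H b).
Qed.

Lemma dickson (X : Type) (x0 : X) (le : X -> X -> Prop) (P : X -> Prop) :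
  (forall a b c, le a b -> le b c -> le a c) -> goodP le P ->
  forall m (F : nat -> seq X),
  (forall n, size (F n) = m /\ forall i, i < m -> P (nth x0 (F n) i)) ->
  exists a b, a < b /\ forall i, i < m -> le (nth x0 (F a) i) (nth x0 (F b) i).
Proof.
move=> Ht Hg; elim=> [|m IH] F HF; first by exists 0, 1.
have HP0 : forall n, P (nth x0 (F n) 0) by move=> n; have [_ H] := HF n; exact: H.
have [phi [Hphi Hle]] := ascending Hg HP0.
have HG : forall n, size (behead (F (phi n))) = m /\
    forall i, i < m -> P (nth x0 (behead (F (phi n))) i).
  move=> n; have [Hs H] := HF (phi n); split; first by rewrite size_behead Hs.
  by move=> i Hi; rewrite nth_behead; apply: H.
have [a [b [Hab Hi]]] := IH (fun k => behead (F (phi k))) HG.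
exists (phi a), (phi b); split; first exact: (@strict_mono phi Hphi a b Hab).
case=> [|i] Hi'.
  exact: (chain_le (g := fun k => nth x0 (F (phi k)) 0) Ht Hle Hab).
by have := Hi i Hi'; rewrite !nth_behead.
Qed.

Lemma pigeon (L : eqType) (labs : seq L) (G : nat -> L) :
  (forall n, G n \in labs) -> exists lam, forall N, exists n, N <= n /\ G n = lam.
Proof.
move=> HG; apply: NNPP => H.
have Hl : forall lam, exists N, forall n, N <= n -> G n != lam.
  move=> lam; apply: NNPP => H1; apply: H; exists lam => N; apply: NNPP => H2; apply: H1.
  exists N => n Hn; apply/eqP => E; apply: H2; by exists n.
have : forall l : seq L, exists N, forall n, N <= n -> G n \notin l.
  elim=> [|lam l [N2 IH]]; first by exists 0.
  have [N1 H1] := Hl lam; exists (maxn N1 N2) => n Hn.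
  rewrite in_cons negb_or H1 ?IH //; first exact: leq_trans (leq_maxr _ _) Hn.
  exact: leq_trans (leq_maxl _ _) Hn.
move=> /(_ labs) [N HN]; by move: (HN N (leqnn N)); rewrite HG.
Qed.

Definition badseq (X : Type) (le : X -> X -> Prop) (f : nat -> X) :=
  forall i j, i < j -> ~ le (f i) (f j).

Theorem wqo_main (X : eqType) (x0 : X) (L : eqType) (le : X -> X -> Prop)
  (Obj : X -> Prop) (sz : X -> nat) (lab : X -> L) (labs : seq L) (ch : X -> seq X)
  (Htr : forall a b c, le a b -> le b c -> le a c)
  (Hlab : forall x, Obj x -> lab x \in labs)
  (Hch : forall x c, Obj x -> c \in ch x -> Obj c /\ sz c < sz x /\ le c x)
  (Hsz : forall x y, Obj x -> Obj y -> lab x = lab y -> size (ch x) = size (ch y))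
  (Hcomb : forall x y, Obj x -> Obj y -> lab x = lab y ->
     (forall i, i < size (ch x) -> le (nth x0 (ch x) i) (nth x0 (ch y) i)) -> le x y) :
  goodP le Obj.
Proof.
apply: NNPP => Hbad.
pose badpref (l : seq X) := exists f, (forall n, Obj (f n)) /\ badseq le f /\
   forall i, i < size l -> f i = nth x0 l i.
have Hb0 : badpref [::].
  apply: NNPP => H; apply: Hbad => f Hf; apply: NNPP => H2; apply: H.
  exists f; split=> //; split=> // i j Hij Hle; apply: H2; by exists i, j.
have Hstep : forall l, exists x, badpref l -> badpref (rcons l x) /\
    forall y, badpref (rcons l y) -> sz x <= sz y.
  move=> l; case: (classic (badpref l)) => [Hl|Hl]; last by exists x0.
  have [f [Hf [Hbf Hag]]] := Hl.
  have Hex : exists n, exists y, badpref (rcons l y) /\ sz y = n.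
    exists (sz (f (size l))), (f (size l)); split=> //; exists f; split=> //; split=> //.
    move=> i; rewrite size_rcons ltnS leq_eqVlt nth_rcons => /orP [/eqP->|Hi].
      by rewrite ltnn eqxx.
    by rewrite Hi Hag.
  have [n [[y [Hy Hyn]] Hmin]] := min_nat Hex.
  exists y => _; split=> // y' Hy'; rewrite Hyn; apply: Hmin; by exists y'.
pose step l := proj1_sig (constructive_indefinite_description _ (Hstep l)).
have Hst l : badpref l -> badpref (rcons l (step l)) /\
    forall y, badpref (rcons l y) -> sz (step l) <= sz y.
  exact: (proj2_sig (constructive_indefinite_description _ (Hstep l))).
pose pre n := iter n (fun l => rcons l (step l)) [::].
pose g n := step (pre n).
have Hpre : forall n, badpref (pre n) by elim=> //= n IH; have [] := Hst _ IH.
have Hsize : forall n, size (pre n) = n by elim=> //= n IH; rewrite size_rcons IH.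
have Hnth : forall n i, i < n -> nth x0 (pre n) i = g i.
  elim=> // n IH i; rewrite ltnS leq_eqVlt /= nth_rcons Hsize => /orP [/eqP->|Hi].
    by rewrite ltnn eqxx.
  by rewrite Hi IH.
have Hgpref : forall n, exists f, (forall k, Obj (f k)) /\ badseq le f /\
    forall i, i <= n -> f i = g i.
  move=> n; have [f [Hf [Hbf Hag]]] := Hpre n.+1; exists f; split=> //; split=> //.
  by move=> i Hi; rewrite Hag ?Hsize // Hnth.
have Hgbad : badseq le g.
  move=> i j Hij; have [f [_ [Hbf Hag]]] := Hgpref j.
  rewrite -Hag ?(ltnW Hij) // -Hag //; exact: Hbf.
have HgObj : forall n, Obj (g n).
  move=> n; have [f [Hf [_ Hag]]] := Hgpref n; rewrite -Hag //.
have Hgmin : forall n y, badpref (rcons (pre n) y) -> sz (g n) <= sz y.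
  move=> n y; exact: (proj2 (Hst _ (Hpre n))).
pose D y := exists n, y \in ch (g n).
have HD : goodP le D.
  move=> h Hh; apply: NNPP => Hno.
  have hbad : badseq le h by move=> i j Hij Hle; apply: Hno; exists i, j.
  pose nn i := proj1_sig (constructive_indefinite_description _ (Hh i)).
  have Hnn i : h i \in ch (g (nn i)).
    exact: (proj2_sig (constructive_indefinite_description _ (Hh i))).
  have [N [[i0 Hi0] HN]] := @min_nat (fun m => exists i, nn i = m) (ex_intro _ (nn 0) (ex_intro _ 0 erefl)).
  have HNi : forall i, N <= nn i by move=> i; apply: HN; exists i.
  pose f' k := if k < N then g k else h (i0 + (k - N)).
  have Hch' : forall i, Obj (h i) /\ sz (h i) < sz (g (nn i)) /\ le (h i) (g (nn i)).
    move=> i; exact: Hch (HgObj _) (Hnn i).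
  have Hbp : badpref (rcons (pre N) (h i0)).
    exists f'; split.
      move=> k; rewrite /f'; case: (k < N) => //; exact: (proj1 (Hch' _)).
    split.
      move=> i j Hij; rewrite /f'; case: (ltnP i N) => HiN; case: (ltnP j N) => HjN.
      - exact: Hgbad.
      - move=> Hle; have [_ [_ Hl2]] := Hch' (i0 + (j - N)).
        apply: (Hgbad i (nn (i0 + (j - N)))); last exact: Htr Hle Hl2.
        exact: leq_trans HiN (HNi _).
      - by move: (leq_trans (ltn_trans Hij HjN) HiN); rewrite ltnn.
      - apply: hbad; by rewrite ltn_add2l -(ltn_add2r N) !subnK.
    move=> i; rewrite size_rcons Hsize ltnS nth_rcons Hsize /f' leq_eqVlt => /orP [/eqP->|Hi].
      by rewrite ltnn eqxx subnn addn0.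
    by rewrite Hi Hnth.
  have Hle := Hgmin N _ Hbp; have [_ [Hlt _]] := Hch' i0; rewrite Hi0 in Hlt.
  by move: (leq_ltn_trans Hle Hlt); rewrite ltnn.
have [lam Hlam] := pigeon (fun n => Hlab _ (HgObj n)).
have [n0 [_ Hn0]] := Hlam 0.
have Hstep2 : forall n, lab (g n) = lam -> exists j, n < j /\ lab (g j) = lam /\ True.
  move=> n _; have [j [Hj Hj2]] := Hlam n.+1; by exists j.
have [psi [_ Hpsi]] := @chain_build (fun n => lab (g n) = lam) (fun _ _ => True) n0 Hstep2 Hn0.
have Hpsi_mono : forall k, psi k < psi k.+1 by move=> k; have [_ [? _]] := Hpsi k.
have HF : forall n, size (ch (g (psi n))) = size (ch (g (psi 0))) /\
    forall i, i < size (ch (g (psi 0))) -> D (nth x0 (ch (g (psi n))) i).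
  move=> n; have Hs : size (ch (g (psi n))) = size (ch (g (psi 0))).
    apply: Hsz; try exact: HgObj; by rewrite (proj1 (Hpsi n)) (proj1 (Hpsi 0)).
  split=> // i Hi; exists (psi n); apply: mem_nth; by rewrite Hs.
have [a [b [Hab Hi]]] := dickson Htr HD HF.
apply: (Hgbad (psi a) (psi b)); first exact: (@strict_mono psi Hpsi_mono a b Hab).
apply: Hcomb; try exact: HgObj.
  by rewrite (proj1 (Hpsi a)) (proj1 (Hpsi b)).
move=> i; rewrite (proj1 (HF a)); exact: Hi.
Qed.

Definition seg_ok (bs : seq (seq nat)) : Prop :=
  all (fun B => 0 < size B) bs /\ uniq (flatten bs) /\
  forall B B', B \in bs -> B' \in bs -> B != B' ->
    forall x y, x \in B -> y \in B' -> (x < y) = (head 0 B < head 0 B').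

Lemma mem_flatten_sub (bs : seq (seq nat)) B : B \in bs -> {subset B <= flatten bs}.
Proof. move=> HB x Hx; apply/flattenP; by exists B. Qed.

Lemma flatten_disj (bs : seq (seq nat)) B B' z : uniq (flatten bs) ->
  B \in bs -> B' \in bs -> B != B' -> z \in B -> z \notin B'.
Proof.
elim: bs => //= C bs IH; rewrite cat_uniq => /and3P [_ Hdis Hu].
rewrite !in_cons => /orP [/eqP EB | HB] /orP [/eqP EB' | HB'] Hne Hz.
- by rewrite EB EB' eqxx in Hne.
- apply/negP => Hz'; move/hasP: Hdis; apply; exists z; first exact: mem_flatten_sub HB' _ Hz'.
  by rewrite -EB.
- apply/negP => Hz'; move/hasP: Hdis; apply; exists z; first exact: mem_flatten_sub HB _ Hz.
  by rewrite -EB'.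
- exact: IH.
Qed.

Lemma flatten_uniq_bs (bs : seq (seq nat)) : all (fun B => 0 < size B) bs ->
  uniq (flatten bs) -> uniq bs.
Proof.
elim: bs => //= C bs IH /andP [HC Hall]; rewrite cat_uniq => /and3P [_ Hdis Hu].
rewrite IH // andbT; apply/negP => HCin; move/hasP: Hdis; apply.
case: C HC HCin => // z C _ HCin; exists z; first exact: mem_flatten_sub HCin _ (mem_head _ _).
exact: mem_head.
Qed.

Lemma seg_uniq bs : seg_ok bs -> uniq bs.
Proof. by move=> [H1 [H2 _]]; apply: flatten_uniq_bs. Qed.

Lemma seg_single s : uniq s -> seg_ok [seq [:: x] | x <- s] /\ flatten [seq [:: x] | x <- s] = s.
Proof.
move=> Hu; rewrite flatten_seq1; split=> //; split; first by apply/allP => B /mapP [x _ ->].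
split; first by rewrite flatten_seq1.
move=> B B' /mapP [x _ ->] /mapP [y _ ->] _ a b; rewrite !inE => /eqP-> /eqP->; by [].
Qed.

Lemma heads_subseq (bs : seq (seq nat)) : all (fun B => 0 < size B) bs ->
  subseq (map (head 0) bs) (flatten bs).
Proof.
elim: bs => [|C bs IH] //=; case: C => [|x B] //= Hall; rewrite eqxx.
by rewrite -[map _ _]cat0s; apply: cat_subseq (sub0seq _) (IH Hall).
Qed.

Lemma block_subseq (bs : seq (seq nat)) B : B \in bs -> subseq B (flatten bs).
Proof.
elim: bs => //= C bs IH; rewrite in_cons => /orP [/eqP-> | HB].
  by rewrite -{1}(cats0 C); apply: cat_subseq (subseq_refl _) (sub0seq _).
by rewrite -[B]cat0s; apply: cat_subseq (sub0seq _) (IH HB).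
Qed.

Lemma split3 (T : Type) (s : seq T) i j : i <= j ->
  s = take i s ++ drop i (take j s) ++ drop j s.
Proof.
move=> Hij; rewrite catA -{1}(cat_take_drop j s); congr (_ ++ _).
by rewrite -{1}(cat_take_drop i (take j s)) take_takel.
Qed.

Lemma uniq3 (T : eqType) (u m w : seq T) x y : uniq (u ++ m ++ w) ->
  x \in m -> y \in u ++ w -> x != y.
Proof.
rewrite !cat_uniq => /and3P [_ H1 /and3P [_ H2 _]] Hx; rewrite mem_cat => /orP [Hy|Hy].
  apply/eqP => E; move/hasP: H1; apply; exists x; rewrite ?mem_cat ?Hx //; by rewrite E.
apply/eqP => E; move/hasP: H2; apply; exists y => //; by rewrite -E.
Qed.

Lemma interval_prop (sg : seq nat) i j : uniq sg -> is_interval (std sg) i j ->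
  forall a b c, a \in drop i (take j sg) -> b \in drop i (take j sg) ->
    c \in take i sg ++ drop j sg -> (a < c) = (b < c) /\ (c < a) = (c < b).
Proof.
move=> Hu [/andP [Hij Hj] [a0 Hp]] a b c Ha Hb Hc.
have Hsplit := split3 sg Hij.
have HR : drop i (take j (std sg)) = map (rank sg) (drop i (take j sg)) by rewrite map_drop map_take.
rewrite HR in Hp.
have Hin : forall d, d \in drop i (take j sg) -> a0 <= rank sg d < a0 + (j - i).
  move=> d Hd; rewrite -mem_iota -(perm_mem Hp); exact: map_f.
have Hmid : forall d, d \in drop i (take j sg) -> d \in sg.
  by move=> d Hd; rewrite Hsplit !mem_cat Hd orbT.
have HcS : c \in sg.
  by move: Hc; rewrite mem_cat => /orP [H|H]; [exact: mem_take H | exact: mem_drop H].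
have HaS := Hmid _ Ha.
have HbS := Hmid _ Hb.
have Hcout : rank sg c \notin iota a0 (j - i).
  rewrite -(perm_mem Hp); apply/negP => /mapP [d Hd Ed].
  have Edc : d = c by apply: (rank_inj (Hmid _ Hd) HcS); by rewrite Ed.
  have Hu3 : uniq (take i sg ++ drop i (take j sg) ++ drop j sg) by rewrite -Hsplit.
  have := uniq3 Hu3 Hd Hc; by rewrite Edc eqxx.
move: Hcout; rewrite mem_iota negb_and -leqNgt -ltnNge.
have /andP [Ha1 Ha2] := Hin _ Ha; have /andP [Hb1 Hb2] := Hin _ Hb.
rewrite !(rank_lt _ HaS) !(rank_lt _ HbS) !(rank_lt _ HcS).
case/orP => Hc'.
- have -> : rank sg a < rank sg c = false by apply/negbTE; rewrite -leqNgt; apply: ltnW; exact: leq_trans Hc' Ha1.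
  have -> : rank sg b < rank sg c = false by apply/negbTE; rewrite -leqNgt; apply: ltnW; exact: leq_trans Hc' Hb1.
  by rewrite (leq_trans Hc' Ha1) (leq_trans Hc' Hb1).
- rewrite (leq_trans Ha2 Hc') (leq_trans Hb2 Hc').
  have -> : rank sg c < rank sg a = false by apply/negbTE; rewrite -leqNgt; apply: ltnW; exact: leq_trans Ha2 Hc'.
  have -> : rank sg c < rank sg b = false by apply/negbTE; rewrite -leqNgt; apply: ltnW; exact: leq_trans Hb2 Hc'.
  by [].
Qed.

Lemma merge_ok bs i j : seg_ok bs -> i < j -> j <= size bs ->
  (forall a b c, a \in drop i (take j (map (head 0) bs)) ->
     b \in drop i (take j (map (head 0) bs)) ->
     c \in take i (map (head 0) bs) ++ drop j (map (head 0) bs) ->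
     (a < c) = (b < c) /\ (c < a) = (c < b)) ->
  seg_ok (take i bs ++ [:: flatten (drop i (take j bs))] ++ drop j bs) /\
  flatten (take i bs ++ [:: flatten (drop i (take j bs))] ++ drop j bs) = flatten bs /\
  size (take i bs ++ [:: flatten (drop i (take j bs))] ++ drop j bs) = i + 1 + (size bs - j).
Proof.
move=> Hseg Hij Hj HI; have Hubs := seg_uniq Hseg; move: Hseg => [Hne [Hu Hx]].
set mid := drop i (take j bs); set M := flatten mid.
have Hsplit := split3 bs (ltnW Hij).
have Hfl : flatten (take i bs ++ [:: M] ++ drop j bs) = flatten bs.
  by rewrite [in RHS]Hsplit !flatten_cat /= cats0.
have Hsz : size (take i bs ++ [:: M] ++ drop j bs) = i + 1 + (size bs - j).
  rewrite !size_cat size_drop /= size_takel ?addnA //; exact: leq_trans (ltnW Hij) Hj.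
have Hmidbs : forall B, B \in mid -> B \in bs.
  by move=> B HB; rewrite Hsplit !mem_cat HB orbT.
have Houtbs : forall B, B \in take i bs ++ drop j bs -> B \in bs.
  move=> B; rewrite mem_cat => /orP [H|H]; [exact: mem_take H | exact: mem_drop H].
have Hubs3 : uniq (take i bs ++ mid ++ drop j bs) by rewrite -Hsplit.
have Hsm : 0 < size mid by rewrite size_drop size_takel ?subn_gt0.
case Emid : mid Hsm => [|B1 rest] // _.
have HB1 : B1 \in bs by apply: Hmidbs; rewrite Emid mem_head.
have HB1ne : 0 < size B1 by move/allP: Hne => /(_ _ HB1).
have HheadM : head 0 M = head 0 B1 by rewrite /M Emid; case: B1 HB1ne Emid HB1.
have Hmidh : forall B, B \in mid -> head 0 B \in drop i (take j (map (head 0) bs)).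
  by move=> B HB; rewrite -map_take -map_drop; apply: map_f.
have Houth : forall B, B \in take i bs ++ drop j bs ->
    head 0 B \in take i (map (head 0) bs) ++ drop j (map (head 0) bs).
  by move=> B HB; rewrite -map_take -map_drop -map_cat; apply: map_f.
have HB1m : B1 \in mid by rewrite Emid mem_head.
split; last by split.
split.
  apply/allP => B; rewrite !mem_cat in_cons in_nil orbF => /or3P [H|/eqP->|H].
  - by move/allP: Hne; apply; exact: mem_take H.
  - rewrite /M Emid /= size_cat; exact: leq_trans HB1ne (leq_addr _ _).
  - by move/allP: Hne; apply; exact: mem_drop H.
split; first by rewrite Hfl.
have Hnew : forall B, B \in take i bs ++ [:: M] ++ drop j bs ->
    B = M \/ B \in take i bs ++ drop j bs.
  move=> B; rewrite !mem_cat in_cons in_nil orbF => /or3P [H|/eqP->|H]; [right|left|right] => //.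
    by rewrite H.
  by rewrite H orbT.
move=> B B' /Hnew [EB|HB] /Hnew [EB'|HB'] Hne' x y Hx1 Hy1.
- by rewrite EB EB' eqxx in Hne'.
- rewrite EB in Hx1 *; rewrite HheadM.
  have /flattenP [Bp HBp Hxp] := Hx1.
  rewrite (Hx Bp B' (Hmidbs _ HBp) (Houtbs _ HB') (uniq3 Hubs3 HBp HB') x y Hxp Hy1).
  exact: (proj1 (HI _ _ _ (Hmidh _ HBp) (Hmidh _ HB1m) (Houth _ HB'))).
- rewrite EB' in Hy1 *; rewrite HheadM.
  have /flattenP [Bp HBp Hyp] := Hy1.
  have Hne2 : B != Bp by rewrite eq_sym; exact: uniq3 Hubs3 HBp HB.
  rewrite (Hx B Bp (Houtbs _ HB) (Hmidbs _ HBp) Hne2 x y Hx1 Hyp).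
  exact: (proj2 (HI _ _ _ (Hmidh _ HBp) (Hmidh _ HB1m) (Houth _ HB))).
- exact: Hx (Houtbs _ HB) (Houtbs _ HB') Hne' x y Hx1 Hy1.
Qed.

Lemma arith1 i j m : i <= j -> j <= m -> 2 <= j - i -> j - i != m ->
  (1 < i + 1 + (m - j)) && (i + 1 + (m - j) < m).
Proof.
move=> /leP H1 /leP H2 /leP H3 /eqP H4; apply/andP; split; apply/leP;
  rewrite -?plusE -?minusE in H3 H4 *; lia.
Qed.

Lemma decomp s : uniq s -> 1 < size s -> exists bs, seg_ok bs /\ flatten bs = s /\
  1 < size bs /\ simple (std (map (head 0) bs)).
Proof.
move=> Hu Hs.
have Hex : exists n, exists bs, seg_ok bs /\ flatten bs = s /\ 1 < size bs /\ size bs = n.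
  exists (size s), [seq [:: x] | x <- s]; have [h1 h2] := seg_single Hu.
  by split=> //; split=> //; rewrite size_map.
have [n [[bs [Hseg [Hfl [H2 Hn]]]] Hmin]] := min_nat Hex.
exists bs; split=> //; split=> //; split=> //.
move=> i j Hint.
have Husg : uniq (map (head 0) bs).
  apply: (subseq_uniq (heads_subseq (proj1 Hseg))); by rewrite Hfl.
have HI := interval_prop Husg Hint.
move: Hint => [/andP [Hij Hj] _]; rewrite size_std size_map in Hj *.
case: (boolP ((j - i == 0) || (j - i == 1) || (j - i == size bs))).
  by case/orP => [/orP [/eqP H|/eqP H]|/eqP H]; [left|right; left|right; right].
rewrite !negb_or => /andP [/andP [H0 H1] Hm].
have H2' : 2 <= j - i by case: (j - i) H0 H1 => [|[|k]].
have Hij' : i < j by rewrite -subn_gt0; exact: leq_trans _ H2'.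
have [Hseg2 [Hfl2 Hsz2]] := merge_ok Hseg Hij' Hj HI.
have /andP [Ha Hb] := arith1 Hij Hj H2' Hm.
have := Hmin (i + 1 + (size bs - j)) (ex_intro _ _ (conj Hseg2 (conj (etrans Hfl2 Hfl) (conj (eq_ind_r (fun k => 1 < k) Ha Hsz2) Hsz2)))).
by rewrite -Hn leqNgt Hb.
Qed.

Definition emb (x y : nat * seq nat) : Prop :=
  exists t, subseq t y.2 /\ size t = size x.2 /\ mono (zip (y.1 :: t) (x.1 :: x.2)).

Lemma emb_trans a b c : emb a b -> emb b c -> emb a c.
Proof.
case: a => v1 s1; case: b => v2 s2; case: c => v3 s3 /=.
move=> [t1 [H1 [S1 M1]]] [t2 [H2 [S2 M2]]] /=.
case/subseqP: H1 => m Hm Et1.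
exists (mask m t2); split; first exact: subseq_trans (mask_subseq _ _) H2.
have Sm : size (mask m t2) = size t1 by rewrite Et1 !size_mask // S2.
split; first by rewrite Sm.
apply: (@mono_comp _ (v2 :: mask m s2)) => /=.
- by rewrite Sm Et1.
- by rewrite -Et1 S1.
- have -> : (v3, v2) :: zip (mask m t2) (mask m s2) = mask (true :: m) (zip (v3 :: t2) (v2 :: s2)).
    by rewrite -zip_mask //= S2.
  exact: mono_mask.
- by rewrite -Et1.
Qed.

Lemma emb_cont v s v' s' : emb (v, s) (v', s') -> cont (v' :: s') (v :: s).
Proof.
move=> [t [H [Hs M]]]; exists (v' :: t); split; first by rewrite /= eqxx.
by split=> //=; rewrite Hs.
Qed.

Lemma emb_sub v s B : subseq B s -> emb (v, B) (v, s).
Proof. move=> H; exists B; split=> //; split=> //; exact: mono_refl. Qed.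

Lemma choose_list (P : nat -> seq nat -> Prop) n :
  (forall k, k < n -> exists t, P k t) ->
  exists ts : seq (seq nat), size ts = n /\ forall k, k < n -> P k (nth [::] ts k).
Proof.
elim: n => [|n IH] H; first by exists [::].
have [ts [Hs Hts]] := IH (fun k Hk => H k (ltnW Hk)).
have [t Ht] := H n (ltnSn n).
exists (rcons ts t); split; first by rewrite size_rcons Hs.
move=> k; rewrite ltnS leq_eqVlt nth_rcons Hs => /orP [/eqP->|Hk].
  by rewrite ltnn eqxx.
by rewrite Hk; apply: Hts.
Qed.

Lemma subseq_flatten (ts bs : seq (seq nat)) : size ts = size bs ->
  (forall k, k < size bs -> subseq (nth [::] ts k) (nth [::] bs k)) ->
  subseq (flatten ts) (flatten bs).
Proof.
elim: ts bs => [|t ts IH] [|B bs] //= [Hs] H.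
apply: cat_subseq; first exact: (H 0).
apply: IH => // k Hk; exact: (H k.+1).
Qed.

Lemma size_flatten_eq (ts bs : seq (seq nat)) : size ts = size bs ->
  (forall k, k < size bs -> size (nth [::] ts k) = size (nth [::] bs k)) ->
  size (flatten ts) = size (flatten bs).
Proof.
elim: ts bs => [|t ts IH] [|B bs] //= [Hs] H.
rewrite !size_cat (H 0) //; congr (_ + _); apply: IH => // k Hk; exact: (H k.+1).
Qed.

Lemma zip_flatten_mem (ts bs : seq (seq nat)) p : size ts = size bs ->
  (forall k, k < size bs -> size (nth [::] ts k) = size (nth [::] bs k)) ->
  p \in zip (flatten ts) (flatten bs) ->
  exists2 k, k < size bs & p \in zip (nth [::] ts k) (nth [::] bs k).
Proof.
elim: ts bs => [|t ts IH] [|B bs] //= [Hs] H.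
rewrite zip_cat ?(H 0) // mem_cat => /orP [Hp|Hp]; first by exists 0.
have [k Hk Hpk] := IH bs Hs (fun k Hk => H k.+1 Hk) Hp; by exists k.+1.
Qed.

Lemma mem_zip12 (a b : seq nat) p : p \in zip a b -> p.1 \in a /\ p.2 \in b.
Proof.
elim: a b => [|x a IH] [|y b] //=; rewrite in_cons => /orP [/eqP->|Hp].
  by rewrite !mem_head.
by have [H1 H2] := IH _ Hp; rewrite !in_cons H1 H2 !orbT.
Qed.

Lemma emb_comb v bs v' bs' : seg_ok bs -> seg_ok bs' -> size bs = size bs' ->
  mono (zip (map (head 0) bs') (map (head 0) bs)) ->
  (forall k, k < size bs -> emb (v, nth [::] bs k) (v', nth [::] bs' k)) ->
  emb (v, flatten bs) (v', flatten bs').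
Proof.
move=> Hseg Hseg' Hsz Hh Hch.
have [ts [Hts Hts2]] := @choose_list (fun k t => subseq t (nth [::] bs' k) /\
   size t = size (nth [::] bs k) /\ mono (zip (v' :: t) (v :: nth [::] bs k))) (size bs) Hch.
have Hsizes : forall k, k < size bs -> size (nth [::] ts k) = size (nth [::] bs k).
  by move=> k Hk; have [_ [? _]] := Hts2 k Hk.
exists (flatten ts); split=> /=.
  apply: subseq_flatten; first by rewrite Hts.
  by rewrite -Hsz => k Hk; have [? _] := Hts2 k Hk.
split; first exact: size_flatten_eq.
have Hcase : forall p, p \in (v', v) :: zip (flatten ts) (flatten bs) ->
    p = (v', v) \/ exists2 k, k < size bs & p \in zip (nth [::] ts k) (nth [::] bs k).
  move=> p; rewrite in_cons => /orP [/eqP->|Hp]; first by left.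
  by right; apply: zip_flatten_mem.
have Hin0 : forall k, (v', v) \in zip (v' :: nth [::] ts k) (v :: nth [::] bs k).
  by move=> k; rewrite /= mem_head.
have Hin1 : forall k p, p \in zip (nth [::] ts k) (nth [::] bs k) ->
    p \in zip (v' :: nth [::] ts k) (v :: nth [::] bs k).
  by move=> k p Hp; rewrite /= in_cons Hp orbT.
have Hubs := seg_uniq Hseg; have Hubs' := seg_uniq Hseg'.
move: Hseg Hseg' => [_ [_ Hx]] [_ [_ Hx']].
move=> p q /Hcase [->|[k Hk Hpk]] /Hcase [->|[l Hl Hql]] //.
- by rewrite /= !ltnn.
- have [_ [_ M]] := Hts2 l Hl; exact: M _ _ (Hin0 l) (Hin1 _ _ Hql).
- have [_ [_ M]] := Hts2 k Hk; exact: M _ _ (Hin1 _ _ Hpk) (Hin0 k).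
case: (eqVneq k l) => [Ekl|Nkl].
  rewrite -Ekl in Hql; have [_ [_ M]] := Hts2 k Hk; exact: M _ _ (Hin1 _ _ Hpk) (Hin1 _ _ Hql).
have [Hp1 Hp2] := mem_zip12 Hpk; have [Hq1 Hq2] := mem_zip12 Hql.
have [Hsk _] := Hts2 k Hk; have [Hsl _] := Hts2 l Hl.
have Hk' : k < size bs' by rewrite -Hsz.
have Hl' : l < size bs' by rewrite -Hsz.
have Hne : nth [::] bs k != nth [::] bs l by rewrite nth_uniq.
have Hne' : nth [::] bs' k != nth [::] bs' l by rewrite nth_uniq.
rewrite (Hx (nth [::] bs k) (nth [::] bs l) (mem_nth _ Hk) (mem_nth _ Hl) Hne p.2 q.2 Hp2 Hq2).
rewrite (Hx' (nth [::] bs' k) (nth [::] bs' l) (mem_nth _ Hk') (mem_nth _ Hl') Hne' p.1 q.1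
   (mem_subseq Hsk Hp1) (mem_subseq Hsl Hq1)).
have Hsz2 : size (map (head 0) bs') = size (map (head 0) bs) by rewrite !size_map Hsz.
have Hk2 : k < size (map (head 0) bs') by rewrite size_map.
have Hl2 : l < size (map (head 0) bs') by rewrite size_map.
have := Hh _ _ (zip_in Hsz2 Hk2) (zip_in Hsz2 Hl2).
by rewrite /= !(nth_map [::]).
Qed.

Lemma std_eq_mono a b : std a = std b -> mono (zip b a).
Proof.
move=> E.
have Hs : size b = size a by rewrite -(size_std a) E size_std.
move=> p q Hp Hq.
have [i Hi ->] := in_zipP Hs Hp; have [j Hj ->] := in_zipP Hs Hq; rewrite /=.
have Hi' : i < size a by rewrite -Hs.
have Hj' : j < size a by rewrite -Hs.
rewrite (rank_lt _ (mem_nth 0 Hi)) (rank_lt _ (mem_nth 0 Hi')).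
rewrite -(nth_map 0 0 (rank b) Hi) -(nth_map 0 0 (rank b) Hj).
rewrite -(nth_map 0 0 (rank a) Hi') -(nth_map 0 0 (rank a) Hj').
by rewrite -/(std a) -/(std b) E.
Qed.

Lemma block_lt bs B : seg_ok bs -> 1 < size bs -> B \in bs -> size B < size (flatten bs).
Proof.
move=> Hseg Hsz HB; have Hu := seg_uniq Hseg; move: Hseg => [Hne [Huf _]].
have [B' [HB' HBB']] : exists B', B' \in bs /\ B' != B.
  case: bs Hsz Hu Hne Huf HB => [|B0 [|B1 bs]] // _ /= /andP [Hn01 _] _ _ _.
  case: (eqVneq B0 B) => [E|N]; last by exists B0; rewrite mem_head.
  exists B1; rewrite !in_cons eqxx orbT; split=> //; rewrite -E.
  by apply/eqP => E1; move: Hn01; rewrite E1 mem_head.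
have HB'ne : 0 < size B' by move/allP: Hne => /(_ _ HB').
have Hz : head 0 B' \in B' by case: B' HB'ne HB' HBB' => // w l _ _ _; rewrite mem_head.
move: (head 0 B') Hz => z Hz.
have HzB : z \notin B := flatten_disj Huf HB' HB HBB' Hz.
have HuB : uniq B := subseq_uniq (block_subseq HB) Huf.
have := uniq_leq_size (s1 := z :: B) (s2 := flatten bs) _ _.
rewrite /= HzB HuB => /(_ isT); apply.
move=> w; rewrite in_cons => /orP [/eqP->|Hw]; first exact: mem_flatten_sub HB' _ Hz.
exact: mem_flatten_sub HB _ Hw.
Qed.

Lemma ltn_flip x y : x != y -> (x < y) = ~~ (y < x).
Proof. move=> H; rewrite ltnNge leq_eqVlt eq_sym (negbTE H); by []. Qed.

Lemma emb_nil v v' s' : emb (v, [::]) (v', s').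
Proof.
exists [::]; split; first exact: sub0seq; split=> // p q.
by rewrite /= !inE => /eqP-> /eqP->; rewrite !ltnn.
Qed.

Lemma emb_one v a v' a' : v != a -> v' != a' -> (a < v) = (a' < v') ->
  emb (v, [:: a]) (v', [:: a']).
Proof.
move=> H1 H2 E; exists [:: a']; split; first by rewrite /= eqxx.
split=> // p q; rewrite /= !inE.
by move=> /orP [/eqP->|/eqP->] /orP [/eqP->|/eqP->] /=; rewrite ?ltnn //
  ?(ltn_flip H1) ?(ltn_flip H2) E.
Qed.

Theorem mainTheorem8 (C : seq nat -> Prop) :
  perm_class C ->
  finite_set (fun p => C p /\ simple p) ->
  finite_set (in_basis C).
Proof.
move=> [HCp HCc] [L HL].
pose Obj (x : nat * seq nat) := uniq (x.1 :: x.2) /\ exists p, C p /\ cont p x.2.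
pose good (x : nat * seq nat) bs := seg_ok bs /\ flatten bs = x.2 /\ 1 < size bs /\
  simple (std (map (head 0) bs)).
have Hdec : forall x : nat * seq nat, exists bs, Obj x -> 1 < size x.2 -> good x bs.
  move=> x; case: (classic (Obj x /\ 1 < size x.2)) => [[Ho Hs]|H].
    have Hu : uniq x.2 by move: Ho => [/andP [_ ?] _].
    have [bs Hbs] := decomp Hu Hs; by exists bs.
  exists [::] => Ho Hs; by case: H.
pose dec x := proj1_sig (constructive_indefinite_description _ (Hdec x)).
have Hdecp : forall x, Obj x -> 1 < size x.2 -> good x (dec x).
  move=> x; exact: (proj2_sig (constructive_indefinite_description _ (Hdec x))).
pose lab (x : nat * seq nat) : (seq nat * nat)%type :=
  if 1 < size x.2 then (std (map (head 0) (dec x)), 0)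
  else ([::], if x.2 is [:: a] then (if a < x.1 then 2 else 3) else 1).
pose labs := [seq (q, 0) | q <- L] ++ [:: ([::], 1); ([::], 2); ([::], 3)].
pose ch (x : nat * seq nat) := if 1 < size x.2 then [seq (x.1, B) | B <- dec x] else [::].
have HstdL : forall x, Obj x -> 1 < size x.2 -> std (map (head 0) (dec x)) \in L.
  move=> [v s] Ho Hs; have [Hseg [Hfl [H2 Hsim]]] := Hdecp _ Ho Hs.
  move: Ho => [Hu [p [Cp Hps]]]; rewrite /= in Hfl Hu.
  have Hsub : subseq (map (head 0) (dec (v, s))) s by have := heads_subseq (proj1 Hseg); rewrite Hfl.
  apply: HL; split=> //; apply: (HCc p) => //.
    apply: std_perm; apply: (subseq_uniq Hsub); by case/andP: Hu.
  apply/contE; apply: cont_trans Hps _; apply: cont_trans (cont_std _).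
  exact: cont_subseq.
have Hgood : goodP emb Obj.
  apply: (@wqo_main _ (0, [::]) _ emb Obj (fun x => size x.2) lab labs ch).
  - exact: emb_trans.
  - move=> [v s] Ho; rewrite /lab /=; case: ifP => Hs.
      by rewrite mem_cat map_f // HstdL.
    rewrite mem_cat; apply/orP; right.
    case: s Ho Hs => [|a [|b s]] /= _ Hs;
      [by rewrite !inE eqxx | by case: (a < v); rewrite !inE eqxx ?orbT | by []].
  - move=> [v s] c Ho; rewrite /ch /=; case: ifP => Hs //.
    move=> /mapP [B HB ->].
    have [Hseg [Hfl [H2 _]]] := Hdecp _ Ho Hs; rewrite /= in Hfl.
    have Hsub : subseq B s by have := block_subseq HB; rewrite Hfl.
    move: Ho => [Hu [p [Cp Hps]]]; split.
      split; first by apply: (subseq_uniq _ Hu); rewrite /= eqxx.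
      exists p; split=> //; exact: cont_trans Hps (cont_subseq Hsub).
    split; first by have := block_lt Hseg H2 HB; rewrite Hfl.
    exact: emb_sub.
  - move=> [v s] [v' s'] Ho Ho'; rewrite /lab /ch /=; case: ifP => Hs; case: ifP => Hs' //=.
    + move=> /(congr1 fst) /= E; rewrite !size_map.
      by have := congr1 size E; rewrite !size_std !size_map.
    + move=> /(congr1 snd) /=; case: s' Ho' Hs' => [|a [|b t]] //= _ _; by case: (a < v').
    + move=> /(congr1 snd) /=; case: s Ho Hs => [|a [|b t]] //= _ _; by case: (a < v).
  - move=> [v s] [v' s'] Ho Ho'; rewrite /lab /ch /=; case: ifP => Hs; case: ifP => Hs' //=.
    + move=> /(congr1 fst) /= E Hchi.
      have [Hseg [Hfl _]] := Hdecp _ Ho Hs; have [Hseg' [Hfl' _]] := Hdecp _ Ho' Hs'.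
      rewrite /= in Hfl Hfl'; rewrite -[in X in emb X _]Hfl -[in X in emb _ X]Hfl'.
      have Hsz : size (dec (v, s)) = size (dec (v', s')).
        by have := congr1 size E; rewrite !size_std !size_map.
      apply: emb_comb => //; first exact: std_eq_mono.
      move=> k Hk; have := Hchi k; rewrite size_map => /(_ Hk).
      by rewrite !(nth_map [::]) // -Hsz.
    + move=> /(congr1 snd) /=; case: s' Ho' Hs' => [|a [|b t]] //= _ _; by case: (a < v').
    + move=> /(congr1 snd) /=; case: s Ho Hs => [|a [|b t]] //= _ _; by case: (a < v).
    + move=> E _; case: s Ho Hs E => [|a [|b t]] //= Ho _ E; first exact: emb_nil.
      case: s' Ho' Hs' E => [|a' [|b' t']] //= Ho' _ E.
        by exfalso; move: E; case: (a < v).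
      have H1 : v != a by move: Ho => [/andP [Hva _] _]; move: Hva; rewrite inE.
      have H2 : v' != a' by move: Ho' => [/andP [Hva _] _]; move: Hva; rewrite inE.
      apply: emb_one => //; move: E; by case: (a < v); case: (a' < v').
apply: NNPP => Hnf.
have Hinf : forall L' : seq (seq nat), exists b, in_basis C b /\ b \notin L'.
  move=> L'; apply: NNPP => H; apply: Hnf; exists L' => b Hb.
  apply: NNPP => Hb'; apply: H; exists b; split=> //; exact/negP.
pose nxt L' := proj1_sig (constructive_indefinite_description _ (Hinf ([::] :: L'))).
have Hnxt : forall L', in_basis C (nxt L') /\ nxt L' \notin [::] :: L'.
  move=> L'; exact: (proj2_sig (constructive_indefinite_description _ (Hinf ([::] :: L')))).
pose pre n := iter n (fun l => nxt l :: l) [::].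
pose bb n := nxt (pre n).
have Hpre : forall i j, i < j -> bb i \in pre j.
  move=> i; elim=> // j IH; rewrite ltnS leq_eqVlt => /orP [/eqP->|Hij].
    by rewrite /= mem_head.
  by rewrite /= in_cons IH ?orbT.
have Hbb : forall n, in_basis C (bb n) /\ bb n != [::] /\ bb n \notin pre n.
  move=> n; have [H1 H2] := Hnxt (pre n); move: H2; rewrite in_cons negb_or => /andP [H2 H3].
  by [].
pose O n := (head 0 (bb n), behead (bb n)).
have HbbE : forall n, bb n = (O n).1 :: (O n).2.
  by move=> n; have [_ [H _]] := Hbb n; rewrite /O /=; case: (bb n) H.
have HO : forall n, Obj (O n).
  move=> n; have [[Hp [HnC Hmin]] _] := Hbb n.
  split; first by rewrite -HbbE; exact: perm_uniq'.
  exists (std (O n).2); split; last exact: cont_std'.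
  have Hu : uniq (O n).2 by move: (perm_uniq' Hp); rewrite HbbE => /andP [].
  apply: Hmin; first exact: std_perm.
    apply/contE; apply: cont_trans (cont_std _); apply: cont_subseq.
    rewrite HbbE; exact: subseq_cons.
  move=> E; have := congr1 size E; rewrite size_std /O /=.
  case: (bb n) (proj1 (proj2 (Hbb n))) => //= x l _ H.
  by move: H; elim: (size l) => // k IH [].
have [i [j [Hij Hle]]] := Hgood O HO.
have Hc : cont (bb j) (bb i) by rewrite !HbbE; exact: emb_cont.
have [[Hpi [HnCi _]] _] := Hbb i; have [[_ [_ Hminj]] [_ Hnotin]] := Hbb j.
apply: HnCi; apply: Hminj => //; first exact/contE.
by move=> E; move: Hnotin; rewrite -E Hpre.
Qed.
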